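(* Let $\mathfrak g=\mathfrak r_3$, the Lie algebra with basis $\{e_1,e_2,e_3\}$ and nonzero brackets $[e_1,e_2]=e_2+e_3$, $[e_1,e_3]=e_3$, identified with $\mathbb R^3$ via this basis. Then $$U=\left\{\begin{pmatrix}1&0&0\\0&1&0\\0&0&1/\lambda\end{pmatrix}:\lambda>0\right\}$$ is a set of representatives of $\mathcal{PM}(\mathfrak g)$.
   Context: $\mathcal M(\mathfrak g)$ is the set of inner products on $\mathfrak g\cong\mathbb R^3$, with $\mathrm{GL}_3(\mathbb R)$-action $g.\langle\cdot,\cdot\rangle=\langle g^{-1}\cdot,g^{-1}\cdot\rangle$; $\langle\cdot,\cdot\rangle_0$ makes $\{e_1,e_2,e_3\}$ orthonormal. Two inner products are isometric up to scaling if $\langle\cdot,\cdot\rangle_1=k\langle f\cdot,f\cdot\rangle_2$ for some $k>0$ and Lie algebra automorphism $f$; $[\langle\cdot,\cdot\rangle]$ denotes the equivalence class and $\mathcal{PM}(\mathfrak g)$ the set of classes. A subset $U\subset\mathrm{GL}_3(\mathbb R)$ is a set of representatives of $\mathcal{PM}(\mathfrak g)$ if $\mathcal{PM}(\mathfrak g)=\{[h.\langle\cdot,\cdot\rangle_0]: h\in U\}$. *)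

(* Defs.v *)
From HB Require Import structures.
From mathcomp Require Import all_boot all_order all_algebra.
From mathcomp Require Import reals.
Set Implicit Arguments. Unset Strict Implicit. Unset Printing Implicit Defensive.
Import Order.TTheory GRing.Theory Num.Theory.
Local Open Scope ring_scope.

Section Defs.
Variable R : realType.

(* g ≅ R^3 via the basis e_1,e_2,e_3 (indices 0,1,2); vectors are columns. *)
Definition vec := 'cV[R]_3.

Definition i0 : 'I_3 := @Ordinal 3 0 isT.
Definition i1 : 'I_3 := @Ordinal 3 1 isT.
Definition i2 : 'I_3 := @Ordinal 3 2 isT.

(* Lie bracket of r_3: [e1,e2] = e2 + e3, [e1,e3] = e3, [e2,e3] = 0,
   extended bilinearly and antisymmetrically. *)
Definition r3_bracket (x y : vec) : vec :=
  let a := x i0 0 * y i1 0 - x i1 0 * y i0 0 in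
  let b := x i0 0 * y i2 0 - x i2 0 * y i0 0 in
  \col_(i < 3) (if i == i0 then 0 else if i == i1 then a else a + b).

Definition bform := vec -> vec -> R.

Definition is_inner_product (B : bform) : Prop :=
  [/\ (forall (a : R) (x y z : vec), B (a *: x + y) z = a * B x z + B y z),
      (forall x y : vec, B x y = B y x)
    & (forall x : vec, x != 0 -> 0 < B x x)].

Definition ip0 : bform := fun x y => (x^T *m y) 0 0.

Definition act (g : 'M[R]_3) (B : bform) : bform :=
  fun x y => B (invmx g *m x) (invmx g *m y).

Definition is_lie_aut (f : 'M[R]_3) : Prop :=
  f \in unitmx /\ forall x y : vec, f *m r3_bracket x y = r3_bracket (f *m x) (f *m y).

Definition isom_up_to_scaling (B1 B2 : bform) : Prop :=
  exists (k : R) (f : 'M[R]_3),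
    0 < k /\ is_lie_aut f /\ forall x y : vec, B1 x y = k * B2 (f *m x) (f *m y).

Definition pclass (B : bform) : bform -> Prop :=
  fun B' => is_inner_product B' /\ isom_up_to_scaling B' B.

Definition Umat (l : R) : 'M[R]_3 :=
  \matrix_(i < 3, j < 3) (if i == j then (if i == i2 then l^-1 else 1) else 0).

End Defs.

(* Main.v *)
Require Import Defs.

From HB Require Import structures.
From mathcomp Require Import all_boot all_order all_algebra.
From mathcomp Require Import reals ring lra.
Import Order.TTheory GRing.Theory Num.Theory.
Local Open Scope ring_scope.
Set Implicit Arguments. Unset Strict Implicit.

Section H.
Variable R : realType.

Lemma ord3P (i : 'I_3) : i = i0 \/ i = i1 \/ i = i2.
Proof.
case: i => [[|[|[|k]]] Hi] //.
- by left; apply/val_inj.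
- by right; left; apply/val_inj.
- by right; right; apply/val_inj.
Qed.

Definition mk3 (a b c : R) : vec R :=
  \col_(i < 3) (if i == i0 then a else if i == i1 then b else c).

Lemma mk3E a b c : (mk3 a b c i0 0 = a) * (mk3 a b c i1 0 = b) * (mk3 a b c i2 0 = c).
Proof. by rewrite !mxE. Qed.

Lemma vec3E (x : vec R) : x = mk3 (x i0 0) (x i1 0) (x i2 0).
Proof.
apply/matrixP => i j; rewrite !ord1 !mxE.
by case: (ord3P i) => [->|[->|->]].
Qed.

Lemma mulmx3 n (M : 'M[R]_3) (x : 'M[R]_(3, n)) i j :
  (M *m x) i j = M i i0 * x i0 j + M i i1 * x i1 j + M i i2 * x i2 j.
Proof.
rewrite mxE !big_ord_recl big_ord0 addr0 addrA.
have E0 : (ord0 : 'I_3) = i0 by apply/val_inj.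
have E1 : (lift ord0 (ord0 : 'I_2)) = i1 by apply/val_inj.
have E2 : (lift ord0 (lift ord0 (ord0 : 'I_1))) = i2 by apply/val_inj.
by rewrite E2 E1 E0.
Qed.

Lemma br3E (x y : vec R) : r3_bracket x y =
  mk3 0 (x i0 0 * y i1 0 - x i1 0 * y i0 0)
      ((x i0 0 * y i1 0 - x i1 0 * y i0 0) + (x i0 0 * y i2 0 - x i2 0 * y i0 0)).
Proof. by apply/matrixP => i j; rewrite !mxE. Qed.


Definition ee (i : 'I_3) : vec R := delta_mx i 0.

Lemma ip_props (B : bform R) : is_inner_product B ->
  [/\ forall u v z, B (u + v) z = B u z + B v z,
      forall a u z, B (a *: u) z = a * B u z,
      forall u v z, B z (u + v) = B z u + B z v
    & forall a u z, B z (a *: u) = a * B z u].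
Proof.
case=> Hl Hs _.
have Ad : forall u v z, B (u + v) z = B u z + B v z.
  by move=> u v z; rewrite -[u in LHS]scale1r Hl mul1r.
have B0 : forall z, B 0 z = 0.
  move=> z; have := Ad 0 0 z; rewrite addr0 => /eqP.
  by rewrite -subr_eq subrr eq_sym => /eqP.
have Sc : forall a u z, B (a *: u) z = a * B u z.
  by move=> a u z; rewrite -[a *: u]addr0 Hl B0 addr0.
split=> //.
- by move=> u v z; rewrite Hs Ad !(Hs z).
- by move=> a u z; rewrite Hs Sc (Hs z).
Qed.

Lemma vec3_ee (x : vec R) : x = x i0 0 *: ee i0 + x i1 0 *: ee i1 + x i2 0 *: ee i2.
Proof.
apply/matrixP => i j; rewrite !ord1 !mxE.
by case: (ord3P i) => [->|[->|->]] /=; rewrite ?mulr1 ?mulr0 ?addr0 ?add0r.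
Qed.

Lemma Bexp (B : bform R) : is_inner_product B -> forall x y : vec R,
  B x y =
    x i0 0 * (y i0 0 * B (ee i0) (ee i0) + y i1 0 * B (ee i0) (ee i1) + y i2 0 * B (ee i0) (ee i2))
  + x i1 0 * (y i0 0 * B (ee i1) (ee i0) + y i1 0 * B (ee i1) (ee i1) + y i2 0 * B (ee i1) (ee i2))
  + x i2 0 * (y i0 0 * B (ee i2) (ee i0) + y i1 0 * B (ee i2) (ee i1) + y i2 0 * B (ee i2) (ee i2)).
Proof.
move=> HB x y; case: (ip_props HB) => Ad Sc Ad' Sc'.
rewrite {1}(vec3_ee x) !Ad !Sc.
by rewrite {1 2 3}(vec3_ee y) !Ad' !Sc'.
Qed.

Lemma ip0E (u v : vec R) : ip0 u v = u i0 0 * v i0 0 + u i1 0 * v i1 0 + u i2 0 * v i2 0.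
Proof.
rewrite /ip0 mxE !big_ord_recl big_ord0 addr0 addrA !mxE.
have E0 : (ord0 : 'I_3) = i0 by apply/val_inj.
have E1 : (lift ord0 (ord0 : 'I_2)) = i1 by apply/val_inj.
have E2 : (lift ord0 (lift ord0 (ord0 : 'I_1))) = i2 by apply/val_inj.
by rewrite E2 E1 E0.
Qed.

Definition Uinv (l : R) : 'M[R]_3 :=
  \matrix_(i < 3, j < 3) (if i == j then (if i == i2 then l else 1) else 0).

Lemma UUinv l : l != 0 -> Umat l *m Uinv l = 1%:M.
Proof.
move=> hl; apply/matrixP => i j; rewrite mulmx3 !mxE.
by case: (ord3P i) => [->|[->|->]]; case: (ord3P j) => [->|[->|->]] /=;
  rewrite ?mulr0 ?mul0r ?mulr1 ?addr0 ?add0r ?mulVf.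
Qed.

Lemma invU l : l != 0 -> invmx (Umat l) = Uinv l.
Proof.
move=> hl; have [U1 _] := mulmx1_unit (UUinv hl).
by rewrite -[RHS](mulKmx U1) UUinv // mulmx1.
Qed.

Lemma actUE l (x y : vec R) : l != 0 ->
  act (Umat l) (@ip0 R) x y = x i0 0 * y i0 0 + x i1 0 * y i1 0 + (l * x i2 0) * (l * y i2 0).
Proof.
move=> hl; rewrite /act invU // ip0E !mulmx3 !mxE /=.
by rewrite !mul0r !mul1r !add0r !addr0.
Qed.


Lemma vec_eq0 (x : vec R) : x i0 0 = 0 -> x i1 0 = 0 -> x i2 0 = 0 -> x = 0.
Proof.
move=> h0 h1 h2; apply/matrixP => i j; rewrite !ord1 mxE.
by case: (ord3P i) => [->|[->|->]].
Qed.

Lemma part1 l : 0 < l -> Umat l \in unitmx /\ is_inner_product (act (Umat l) (@ip0 R)).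
Proof.
move=> lp; have hl : l != 0 by rewrite gt_eqF.
split; first by case: (mulmx1_unit (UUinv hl)).
split.
- by move=> a x y z; rewrite !actUE // !mxE; ring.
- by move=> x y; rewrite !actUE //; ring.
- move=> x xn0; rewrite actUE //.
  have Hsq : forall a : R, a != 0 -> 0 < a * a.
    by move=> a ha; rewrite -expr2 exprn_even_gt0.
  have Hge : forall a : R, 0 <= a * a by move=> a; rewrite -expr2 sqr_ge0.
  have [h0|h0] := eqVneq (x i0 0) 0; last first.
    by have := Hsq _ h0; have := Hge (x i1 0); have := Hge (l * x i2 0); lra.
  have [h1|h1] := eqVneq (x i1 0) 0; last first.
    by have := Hsq _ h1; have := Hge (x i0 0); have := Hge (l * x i2 0); lra.
  have [h2|h2] := eqVneq (x i2 0) 0.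
    by move: xn0; rewrite (vec_eq0 h0 h1 h2) eqxx.
  have := Hsq (l * x i2 0) (mulf_neq0 hl h2).
  by have := Hge (x i0 0); have := Hge (x i1 0); lra.
Qed.


Lemma aut_mul (f g : 'M[R]_3) : is_lie_aut f -> is_lie_aut g -> is_lie_aut (g *m f).
Proof.
move=> [uf hf] [ug hg]; split; first by rewrite unitmx_mul ug uf.
by move=> x y; rewrite -mulmxA hf hg !mulmxA.
Qed.

Lemma aut_inv (f : 'M[R]_3) : is_lie_aut f -> is_lie_aut (invmx f).
Proof.
move=> [uf hf]; split; first by rewrite unitmx_inv.
move=> x y.
rewrite -[LHS](mulKmx uf) -[in RHS](mulKmx uf (r3_bracket _ _)) hf.
by rewrite !(mulmxA f) !(mulmxV uf) !mul1mx.
Qed.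

Lemma iso_trans (B1 B2 B3 : bform R) :
  isom_up_to_scaling B1 B2 -> isom_up_to_scaling B2 B3 -> isom_up_to_scaling B1 B3.
Proof.
move=> [k1 [f1 [k1p [a1 h1]]]] [k2 [f2 [k2p [a2 h2]]]].
exists (k1 * k2), (f2 *m f1); split; first by rewrite mulr_gt0.
split; first exact: aut_mul.
by move=> x y; rewrite h1 h2 !mulmxA mulrA.
Qed.

Lemma iso_sym (B1 B2 : bform R) :
  isom_up_to_scaling B1 B2 -> isom_up_to_scaling B2 B1.
Proof.
move=> [k [f [kp [[uf hf] h]]]].
exists k^-1, (invmx f); split; first by rewrite invr_gt0.
split; first exact: aut_inv.
by move=> x y; rewrite h !mulmxA !(mulmxV uf) !mul1mx mulrA mulVf ?mul1r ?gt_eqF.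
Qed.


Definition Fm (p q a b : R) : 'M[R]_3 :=
  \matrix_(i < 3, j < 3)
    (if i == i0 then (if j == i0 then 1 else 0)
     else if i == i1 then (if j == i0 then p else if j == i1 then a else 0)
     else (if j == i0 then q else if j == i1 then b else a)).

Lemma FmE (p q a b : R) (x : vec R) :
  Fm p q a b *m x = mk3 (x i0 0) (p * x i0 0 + a * x i1 0) (q * x i0 0 + b * x i1 0 + a * x i2 0).
Proof.
apply/matrixP => i j; rewrite !ord1 mulmx3 !mxE.
by case: (ord3P i) => [->|[->|->]] /=; rewrite ?mul1r ?mul0r ?addr0 ?add0r.
Qed.

Lemma Fm_aut (p q a b : R) : a != 0 -> is_lie_aut (Fm p q a b).
Proof.
move=> ha; split.
  rewrite unitmxE det_trig; last first.
    apply/is_trig_mxP => i j; rewrite !mxE.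
    by case: (ord3P i) => [->|[->|->]]; case: (ord3P j) => [->|[->|->]].
  rewrite !big_ord_recl big_ord0 !mxE /= mul1r mulr1 unitfE.
  exact: mulf_neq0.
move=> x y; rewrite (FmE p q a b (r3_bracket x y)) (FmE p q a b x) (FmE p q a b y) !br3E !mk3E.
by apply/matrixP => i j; rewrite !ord1 !mxE; case: (ord3P i) => [->|[->|->]] /=; ring.
Qed.

Lemma alg (G01 G02 G11 G12 G22 a x0 x1 x2 y0 y1 y2 : R) :
  G22 != 0 -> G11 - G12^+2 / G22 != 0 -> a != 0 ->
  let s := G11 - G12^+2 / G22 in
  let t := G01 - G02 * G12 / G22 in
  let G00 := s / (a * a) + G02^+2 / G22 + t^+2 / s in
  let k := s / (a * a) in
  let m := G22 / s in
  let b := a * G12 / G22 in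
  let q := G02 * a / G22 in
  let p := t / (k * a) in
  x0 * (y0 * G00 + y1 * G01 + y2 * G02)
  + x1 * (y0 * G01 + y1 * G11 + y2 * G12)
  + x2 * (y0 * G02 + y1 * G12 + y2 * G22)
  = k * (x0 * y0 + (p * x0 + a * x1) * (p * y0 + a * y1)
         + m * ((q * x0 + b * x1 + a * x2) * (q * y0 + b * y1 + a * y2))).
Proof.
move=> h22 hs ha; cbv zeta.
have E : G11 * G22 - G12 ^+ 2 = (G11 - G12 ^+ 2 / G22) * G22 by field.
by field; rewrite h22 ha E mulf_neq0.
Qed.

Lemma mk3_neq0 (a b c : R) : a != 0 -> mk3 a b c != 0.
Proof.
move=> ha; apply/negP => /eqP/matrixP/(_ i0 0); rewrite !mxE /= => E.
by move: ha; rewrite E eqxx.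
Qed.

Lemma main2 (B : bform R) : is_inner_product B ->
  exists l : R, 0 < l /\ isom_up_to_scaling B (act (Umat l) (@ip0 R)).
Proof.
move=> HB; have [Hl Hs Hp] := HB.
set G00 := B (ee i0) (ee i0); set G01 := B (ee i0) (ee i1); set G02 := B (ee i0) (ee i2).
set G11 := B (ee i1) (ee i1); set G12 := B (ee i1) (ee i2); set G22 := B (ee i2) (ee i2).
have BE : forall x y : vec R, B x y =
    x i0 0 * (y i0 0 * G00 + y i1 0 * G01 + y i2 0 * G02)
  + x i1 0 * (y i0 0 * G01 + y i1 0 * G11 + y i2 0 * G12)
  + x i2 0 * (y i0 0 * G02 + y i1 0 * G12 + y i2 0 * G22).
  move=> x y; rewrite (Bexp HB) -/G00 -/G01 -/G02 -/G11 -/G12 -/G22.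
  by rewrite (Hs (ee i1) (ee i0)) (Hs (ee i2) (ee i0)) (Hs (ee i2) (ee i1)).
have g22p : 0 < G22.
  apply: Hp; apply/negP => /eqP/matrixP/(_ i2 0); rewrite !mxE /= => E.
  by move/eqP: E; rewrite oner_eq0.
have h22 : G22 != 0 by rewrite gt_eqF.
pose s := G11 - G12 ^+ 2 / G22.
pose t := G01 - G02 * G12 / G22.
pose c := G00 - G02 ^+ 2 / G22 - t ^+ 2 / s.
have sp : 0 < s.
  have := Hp (mk3 0 G22 (- G12)).
  rewrite BE !mk3E.
  have -> : 0 * (0 * G00 + G22 * G01 + - G12 * G02) +
    G22 * (0 * G01 + G22 * G11 + - G12 * G12) +
    - G12 * (0 * G02 + G22 * G12 + - G12 * G22) = G22 ^+ 2 * s.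
    by rewrite /s; field.
  rewrite pmulr_rgt0 ?exprn_gt0 //; apply.
  apply/negP => /eqP/matrixP/(_ i1 0); rewrite !mxE /= => E.
  by move: h22; rewrite E eqxx.
have hs : s != 0 by rewrite gt_eqF.
pose mu := - t / s.
pose nu := - (G02 + mu * G12) / G22.
have cp : 0 < c.
  have := Hp (mk3 1 mu nu) (mk3_neq0 _ _ (oner_neq0 R)).
  rewrite BE !mk3E.
  suff -> : 1 * (1 * G00 + mu * G01 + nu * G02) + mu * (1 * G01 + mu * G11 + nu * G12) +
    nu * (1 * G02 + mu * G12 + nu * G22) = c by [].
  have E2 : G11 * G22 - G12 ^+ 2 = s * G22 by rewrite /s; field.
  by rewrite /c /nu /mu /t /s; field; rewrite h22 E2 mulf_neq0.
pose a := Num.sqrt (s / c).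
have ap : 0 < a by rewrite sqrtr_gt0 divr_gt0.
have ha : a != 0 by rewrite gt_eqF.
have aa : a * a = s / c by rewrite -expr2 sqr_sqrtr // ltW // divr_gt0.
have kc : s / (a * a) = c.
  rewrite aa invf_div mulrA mulrC mulrA mulVf ?mul1r //.
pose l := Num.sqrt (G22 / s).
have lp : 0 < l by rewrite sqrtr_gt0 divr_gt0.
have hl : l != 0 by rewrite gt_eqF.
have ll : l * l = G22 / s by rewrite -expr2 sqr_sqrtr // ltW // divr_gt0.
have HG00 : G00 = s / (a * a) + G02 ^+ 2 / G22 + t ^+ 2 / s.
  by rewrite kc /c; ring.
exists l; split=> //.
exists c, (Fm (t / (s / (a * a) * a)) (G02 * a / G22) a (a * G12 / G22)).
split=> //; split; first exact: Fm_aut.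
move=> x y.
rewrite BE actUE // (FmE _ _ _ _ x) (FmE _ _ _ _ y) !mk3E.
have := @alg G01 G02 G11 G12 G22 a (x i0 0) (x i1 0) (x i2 0) (y i0 0) (y i1 0) (y i2 0) h22 hs ha.
cbv zeta => E.
rewrite HG00; apply: (etrans E); rewrite -/s -/t kc -ll; ring.
Qed.

End H.

From Stdlib Require Import FunctionalExtensionality PropExtensionality.

Theorem proposition3p8 (R : realType) :
  (forall l : R, 0 < l ->
     Umat l \in unitmx /\ is_inner_product (act (Umat l) (@ip0 R))) /\
  (forall B : bform R, is_inner_product B ->
     exists l : R, 0 < l /\ pclass B = pclass (act (Umat l) (@ip0 R))).
Proof.
split; first exact: part1.
move=> B HB; have [l [lp H]] := main2 HB.
exists l; split=> //.
apply: functional_extensionality => B'.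
apply: propositional_extensionality; rewrite /pclass; split.
- by case=> h1 h2; split=> //; exact: iso_trans h2 H.
- by case=> h1 h2; split=> //; exact: iso_trans h2 (iso_sym H).
Qed.
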